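(* (a) For every integer $i\ge 1$ and every integer $m\ge i+1$, $$d_i^2(m)\bigl(d_i^2(m)-d_i(m-1)d_i(m+1)\bigr)>d_i^2(m-1)\bigl(d_i^2(m+1)-d_i(m)d_i(m+2)\bigr).$$ (b) For $i=0$ the reverse strict inequality holds: for every integer $m\ge 1$, $$d_0^2(m)\bigl(d_0^2(m)-d_0(m-1)d_0(m+1)\bigr)<d_0^2(m-1)\bigl(d_0^2(m+1)-d_0(m)d_0(m+2)\bigr).$$
   Context: For integers $m\ge 0$ and $0\le i\le m$, the Boros–Moll numbers are $$d_i(m)=2^{-2m}\sum_{k=i}^{m}2^k\binom{2m-2k}{m-k}\binom{m+k}{k}\binom{k}{i}.$$ *)

(* Defs.v *)
From mathcomp Require Import all_boot all_order all_algebra.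
Set Implicit Arguments. Unset Strict Implicit. Unset Printing Implicit Defensive.
Import Order.TTheory GRing.Theory Num.Theory.
Local Open Scope ring_scope.

Definition bm (i m : nat) : rat :=
  (2%:R ^+ (2 * m))^-1 *
  \sum_(i <= k < m.+1)
     (2 ^ k * 'C(2 * m - 2 * k, m - k) * 'C(m + k, k) * 'C(k, i))%:R.

(* Main.v *)
Require Import Defs.
From mathcomp Require Import all_boot all_order all_algebra.
From mathcomp Require Import ring lra zify.
Import Order.TTheory GRing.Theory Num.Theory.
Local Open Scope ring_scope.


Definition Tq (i M k : nat) : rat :=
  (2 ^ k * 'C(2 * M - 2 * k, M - k) * 'C(M + k, k) * 'C(k, i))%:R.
Definition Mp (M I K : rat) : rat := 64%:R - 112%:R*K + 64%:R*K^+2 + 64%:R*I + 32%:R*I*K - 32%:R*I*K^+2 + 256%:R*M - 328%:R*M*K + 128%:R*M*K^+2 + 192%:R*M*I + 48%:R*M*I*K - 48%:R*M*I*K^+2 + 400%:R*M^+2 - 360%:R*M^+2*K + 80%:R*M^+2*K^+2 + 208%:R*M^+2*I + 16%:R*M^+2*I*K - 16%:R*M^+2*I*K^+2 + 304%:R*M^+3 - 176%:R*M^+3*K + 16%:R*M^+3*K^+2 + 96%:R*M^+3*I + 112%:R*M^+4 - 32%:R*M^+4*K + 16%:R*M^+4*I + 16%:R*M^+5.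
Definition Rc (M I K : rat) : rat :=
  (K - I) * Mp M I K / ((2%:R*M+3%:R-2%:R*K)*(M+K+1)*(M+K+2%:R)).
Definition p2 (M I : rat) : rat := 4%:R*(M+1)*(M+2%:R)*(M+2%:R-I).
Definition p1 (M I : rat) : rat := 2%:R*(M+1)*(8%:R*M^+2+24%:R*M+19%:R-4%:R*I^+2).
Definition p0 (M I : rat) : rat := (4%:R*M+3%:R)*(4%:R*M+5%:R)*(M+1+I).
Definition Gq (i m k : nat) : rat := Rc m%:R i%:R k%:R * Tq i m.+2 k.


Lemma my_natr_div (a b x y : nat) : (0 < a)%N -> (a * x = b * y)%N ->
  x%:R = b%:R / a%:R * y%:R :> rat.
Proof.
move=> ha h. have Ha : (a%:R : rat) != 0 by rewrite pnatr_eq0 -lt0n.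
apply: (mulfI Ha). rewrite -natrM h natrM. field. exact: Ha.
Qed.

Lemma L1 (n : nat) : ('C(2*n+2, n+1))%:R =
  (2%:R * (2%:R * n%:R + 1)) / (n%:R + 1) * ('C(2*n, n))%:R :> rat.
Proof.
have h1 := mul_bin_diag (2*n+2)%N n.
rewrite (_ : ((2*n+2).-1 = (2*n).+1)%N) in h1; last lia.
have h2 := mul_bin_down (2*n)%N.+1 n.
rewrite (_ : ((2*n).+1 - n = n.+1)%N) in h2; last lia.
rewrite (_ : ((2*n).+1.-1 = 2*n)%N) in h2; last lia.
rewrite [(n+1)%N]addn1.
rewrite (my_natr_div _ _ _ _ _ (esym h1)) //.
rewrite (my_natr_div _ _ _ _ _ (esym h2)) //.
rewrite !natrD ?natrM -!natr1 /=. field.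
all: try (apply: lt0r_neq0; have := ler0n rat n; lra).
Qed.

Ltac ncast := repeat (first [rewrite natrD | rewrite natrM | rewrite natrX | rewrite -natr1]).

Lemma L2 (M k : nat) : ('C(M.+1 + k, k))%:R =
  (M%:R + 1 + k%:R) / (M%:R + 1) * ('C(M + k, k))%:R :> rat.
Proof.
have h := mul_bin_down (M.+1 + k)%N k.
rewrite (_ : (M.+1 + k - k = M.+1)%N) in h; last lia.
rewrite (_ : ((M.+1 + k).-1 = M + k)%N) in h; last lia.
rewrite (my_natr_div _ _ _ _ _ (esym h)) //. ncast. field.
apply: lt0r_neq0; have := ler0n rat M; lra.
Qed.

Lemma L3 (n k : nat) : ('C(n.+1, k.+1))%:R =
  (n%:R + 1) / (k%:R + 1) * ('C(n, k))%:R :> rat.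
Proof.
have h := mul_bin_diag n.+1 k.
rewrite (my_natr_div _ _ _ _ _ (esym h)) //. ncast. field.
apply: lt0r_neq0; have := ler0n rat k; lra.
Qed.

Lemma L4 (k i : nat) : (i <= k)%N -> ('C(k.+1, i))%:R =
  (k%:R + 1) / (k%:R + 1 - i%:R) * ('C(k, i))%:R :> rat.
Proof.
move=> hik.
have h := mul_bin_down k.+1 i.
rewrite (my_natr_div _ _ _ _ _ (esym h)); last lia.
rewrite natrB; last lia. ncast. field.
have : (i%:R <= k%:R :> rat) by rewrite ler_nat.
move=> H; apply: lt0r_neq0; lra.
Qed.


Lemma step (i m k : nat) : (i <= k)%N -> (k <= m)%N ->
  p2 m%:R i%:R * Tq i m.+2 k - 4%:R * p1 m%:R i%:R * Tq i m.+1 k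
   + 16%:R * p0 m%:R i%:R * Tq i m k = Gq i m k.+1 - Gq i m k.
Proof.
move=> hik hkm.
have [n ->] : exists n, m = (k + n)%N by exists (m - k)%N; lia.
rewrite /Gq /Tq.
have e2a : ('C(2 * (k + n).+2 - 2 * k, (k + n).+2 - k) = 'C(2*n.+1+2, n.+1+1))%N.
  by f_equal; lia.
have e2b : ('C(2 * n.+1, n.+1) = 'C(2*n+2, n+1))%N by f_equal; lia.
have e1a : ('C(2 * (k + n).+1 - 2 * k, (k + n).+1 - k) = 'C(2*n+2, n+1))%N.
  by f_equal; lia.
have e0a : ('C(2 * (k + n) - 2 * k, (k + n) - k) = 'C(2*n, n))%N.
  by f_equal; lia.
have e3a : ('C(2 * (k + n).+2 - 2 * k.+1, (k + n).+2 - k.+1) = 'C(2*n+2, n+1))%N.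
  by f_equal; lia.
rewrite e2a e1a e0a e3a.
rewrite !natrM !natrX.
rewrite (L1 n.+1) e2b (L1 n).
rewrite addnS L3 !L2 (L4 _ _ hik) exprS.
ncast.
rewrite /p2 /p1 /p0 /Rc /Mp.
field.
have := ler0n rat k; have := ler0n rat n.
have : (i%:R <= k%:R :> rat) by rewrite ler_nat.
move=> H1 H2 H3.
by repeat (apply/andP; split); apply: lt0r_neq0; lra.
Qed.

Lemma bnd (i m : nat) : (i <= m.+1)%N ->
  Gq i m m.+1 + p2 m%:R i%:R * (Tq i m.+2 m.+1 + Tq i m.+2 m.+2)
   - 4%:R * p1 m%:R i%:R * Tq i m.+1 m.+1 = 0.
Proof.
move=> him.
rewrite /Gq /Tq.
have ea : ('C(2 * m.+2 - 2 * m.+1, m.+2 - m.+1) = 2)%N.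
  rewrite (_ : (2 * m.+2 - 2 * m.+1 = 2)%N); last lia.
  by rewrite (_ : (m.+2 - m.+1 = 1)%N) ?bin1; last lia.
have eb : ('C(2 * m.+2 - 2 * m.+2, m.+2 - m.+2) = 1)%N by rewrite !subnn.
have ec : ('C(2 * m.+1 - 2 * m.+1, m.+1 - m.+1) = 1)%N by rewrite !subnn.
rewrite ea eb ec.
have h := mul_bin_down (2 * m+3)%N m.+1.
rewrite (_ : (2 * m+3 - m.+1 = m.+2)%N) in h; last lia.
rewrite (_ : ((2 * m+3).-1 = 2 * m+2)%N) in h; last lia.
have E1 : ('C(m.+2 + m.+1, m.+1) = 'C(2 * m+3, m.+1))%N by f_equal; lia.
have E2 : ('C(m.+2 + m.+2, m.+2) = 'C(2 * m.+1+2, m.+1+1))%N by f_equal; lia.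
have E3 : ('C(m.+1 + m.+1, m.+1) = 'C(2 * m+2, m.+1))%N by f_equal; lia.
have E4 : ('C(2 * m.+1, m.+1) = 'C(2 * m+2, m.+1))%N by f_equal; lia.
rewrite E1 E2 E3 !natrM !natrX !exprS (L1 m.+1) E4.
rewrite (my_natr_div _ _ _ _ _ (esym h)) //.
rewrite (L4 _ _ him).
ncast.
rewrite /p2 /p1 /p0 /Rc /Mp.
field.
have := ler0n rat m.
have : (i%:R <= m%:R + 1 :> rat) by rewrite natr1 ler_nat.
move=> H1 H2.
by repeat (apply/andP; split); apply: lt0r_neq0; lra.
Qed.

Definition Sq (i M : nat) : rat := \sum_(i <= k < M.+1) Tq i M k.

Lemma Gi0 i m : Gq i m i = 0.
Proof. by rewrite /Gq /Rc subrr !mul0r. Qed.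

Lemma sumrec (i m : nat) : (i <= m)%N ->
  p2 m%:R i%:R * Sq i m.+2 - 4%:R * p1 m%:R i%:R * Sq i m.+1
   + 16%:R * p0 m%:R i%:R * Sq i m = 0.
Proof.
move=> him.
have tele : \sum_(i <= k < m.+1) (p2 m%:R i%:R * Tq i m.+2 k - 4%:R * p1 m%:R i%:R * Tq i m.+1 k
   + 16%:R * p0 m%:R i%:R * Tq i m k) = Gq i m m.+1 - Gq i m i.
  apply: telescope_sumr_eq; first lia.
  move=> k /andP [h1 h2]; apply: step => //; lia.
rewrite Gi0 subr0 !big_split /= sumrN -!mulr_sumr in tele.
rewrite /Sq (big_nat_recr m.+2); last lia.
rewrite (big_nat_recr m.+1); last lia.
rewrite (big_nat_recr m.+1 i (Tq i m.+1)); last lia.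
have H2 := bnd i m (leqW him).
set A2 := \sum_(i <= k < m.+1) Tq i m.+2 k in tele *.
set A1 := \sum_(i <= k < m.+1) Tq i m.+1 k in tele *.
set A0 := \sum_(i <= k < m.+1) Tq i m k in tele *.
rewrite /=.
transitivity (Gq i m m.+1 + p2 m%:R i%:R * (Tq i m.+2 m.+1 + Tq i m.+2 m.+2)
   - 4%:R * p1 m%:R i%:R * Tq i m.+1 m.+1); last exact: H2.
rewrite -tele. ring.
Qed.

Lemma bmS (i M : nat) : bm i M = (2%:R ^+ (2 * M))^-1 * Sq i M.
Proof. by []. Qed.

Lemma bmrec (i m : nat) : (i <= m)%N ->
  p2 m%:R i%:R * bm i m.+2 = p1 m%:R i%:R * bm i m.+1 - p0 m%:R i%:R * bm i m.
Proof.
move=> him. have H := sumrec i m him.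
rewrite !bmS.
have e2 : (2 * m.+2 = (2 * m).+4)%N by lia.
have e1 : (2 * m.+1 = (2 * m).+2)%N by lia.
rewrite e2 e1 !exprS.
have hz : (2%:R ^+ (2 * m) : rat) != 0 by apply: expf_neq0; rewrite pnatr_eq0.
apply/eqP; rewrite -subr_eq0; apply/eqP.
transitivity ((2%:R ^+ (2 * m))^-1 / 16%:R * (p2 m%:R i%:R * Sq i m.+2 - 4%:R * p1 m%:R i%:R * Sq i m.+1
   + 16%:R * p0 m%:R i%:R * Sq i m)).
  field. by rewrite hz.
by rewrite H mulr0.
Qed.


Definition Dg (I K : rat) : rat := I^+2 + 2%:R*I + 2%:R*K.
Definition Fn (I K : rat) : rat :=
  (4%:R*(I+K)^+2 + 7%:R*(I+K) + I + 3%:R) * Dg I K + K * I^+2.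
Definition Fd (I K : rat) : rat := 2%:R*(K+1)*(I+K+1) * Dg I K.

Definition PS (W K a s : rat) : rat :=
  let I := W + 1 in let N := I + K in
  let B := Fn I K * a + s in
  let C := p1 N I * B - p0 N I * Fd I K * a in
  let E := p1 (N+1) I * C - p0 (N+1) I * p2 N I * B in
  B^+2 * (B^+2 * p2 N I ^+2 - a * C * Fd I K * p2 N I) * p2 (N+1) I
   - a^+2 * Fd I K ^+2 * (C^+2 * p2 (N+1) I - B * E * p2 N I).

Lemma PS_expand (W K a s : rat) : PS W K a s = 238935453696%:R*a^+4 + 331776%:R*s^+4 + 44126208%:R*a*s^+3 + 1932097536%:R*a^+2*s^+2 + 35501856768%:R*a^+3*s + 1188864%:R*K*s^+4 + 224916480%:R*K*a*s^+3 + 12406099968%:R*K*a^+2*s^+2 + 273056126976%:R*K*a^+3*s + 2140407825408%:R*K*a^+4 + 1880064%:R*K^+2*s^+4 + 521330688%:R*K^+2*a*s^+3 + 36696407040%:R*K^+2*a^+2*s^+2 + 977232024576%:R*K^+2*a^+3*s + 8998407272448%:R*K^+2*a^+4 + 1721856%:R*K^+3*s^+4 + 727205376%:R*K^+3*a*s^+3 + 66297240576%:R*K^+3*a^+2*s^+2 + 2160515865600%:R*K^+3*a^+3*s + 23593858785792%:R*K^+3*a^+4 + 1006336%:R*K^+4*s^+4 + 680355584%:R*K^+4*a*s^+3 + 81750885248%:R*K^+4*a^+2*s^+2 + 3303077505408%:R*K^+4*a^+3*s + 43244693860608%:R*K^+4*a^+4 + 389184%:R*K^+5*s^+4 + 450019648%:R*K^+5*a*s^+3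 + 72799538688%:R*K^+5*a^+2*s^+2 + 3703215294592%:R*K^+5*a^+3*s + 58850598339648%:R*K^+5*a^+4 + 99584%:R*K^+6*s^+4 + 215891968%:R*K^+6*a*s^+3 + 48287231104%:R*K^+6*a^+2*s^+2 + 3149737489920%:R*K^+6*a^+3*s + 61639053794432%:R*K^+6*a^+4 + 16256%:R*K^+7*s^+4 + 75716608%:R*K^+7*a*s^+3 + 24237319680%:R*K^+7*a^+2*s^+2 + 2073269592896%:R*K^+7*a^+3*s + 50816764045376%:R*K^+7*a^+4 + 1536%:R*K^+8*s^+4 + 19272320%:R*K^+8*a*s^+3 + 9251737344%:R*K^+8*a^+2*s^+2 + 1067379258240%:R*K^+8*a^+3*s + 33438066942976%:R*K^+8*a^+4 + 64%:R*K^+9*s^+4 + 3472576%:R*K^+9*a*s^+3 + 2672639616%:R*K^+9*a^+2*s^+2 + 431217586560%:R*K^+9*a^+3*s + 17697417721984%:R*K^+9*a^+4 + 420480%:R*K^+10*a*s^+3 + 575166976%:R*K^+10*a^+2*s^+2 + 136243008384%:R*K^+10*a^+3*s + 7553836349184%:R*K^+10*a^+4 + 30720%:R*K^+11*a*s^+3 + 89415552%:R*K^+11*a^+2*s^+2 + 33306538688%:R*K^+11*a^+3*s + 2594875313856%:R*K^+11*a^+4 + 1024%:R*K^+12*a*s^+3 + 9492224%:R*K^+12*a^+2*s^+2 + 6174941568%:R*K^+12*a^+3*s + 712299518080%:R*K^+12*a^+4 + 615936%:R*K^+13*a^+2*s^+2 + 839093248%:R*K^+13*a^+3*s + 154179881536%:R*K^+13*a^+4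 + 18432%:R*K^+14*a^+2*s^+2 + 78787584%:R*K^+14*a^+3*s + 25746199808%:R*K^+14*a^+4 + 4564992%:R*K^+15*a^+3*s + 3201678848%:R*K^+15*a^+4 + 122880%:R*K^+16*a^+3*s + 279318528%:R*K^+16*a^+4 + 15261696%:R*K^+17*a^+4 + 393216%:R*K^+18*a^+4 + 746496%:R*W*s^+4 + 208604160%:R*W*a*s^+3 + 14060915712%:R*W*a^+2*s^+2 + 350720990208%:R*W*a^+3*s + 2998430327808%:R*W*a^+4 + 2377728%:R*W*K*s^+4 + 960330240%:R*W*K*a*s^+3 + 83134126080%:R*W*K*a^+2*s^+2 + 2518942468608%:R*W*K*a^+3*s + 25362600228864%:R*W*K*a^+4 + 3290112%:R*W*K^+2*s^+4 + 1995057408%:R*W*K^+2*a*s^+3 + 225221197824%:R*W*K^+2*a^+2*s^+2 + 8385695799552%:R*W*K^+2*a^+3*s + 100418325073920%:R*W*K^+2*a^+4 + 2582784%:R*W*K^+3*s^+4 + 2469951872%:R*W*K^+3*a*s^+3 + 370268141824%:R*W*K^+3*a^+2*s^+2 + 17167683662208%:R*W*K^+3*a^+3*s + 247245107205888%:R*W*K^+3*a^+4 + 1257920%:R*W*K^+4*s^+4 + 2025559552%:R*W*K^+4*a*s^+3 + 412214697536%:R*W*K^+4*a^+2*s^+2 + 24175366173440%:R*W*K^+4*a^+3*s + 424145780662464%:R*W*K^+4*a^+4 + 389184%:R*W*K^+5*s^+4 + 1155751808%:R*W*K^+5*a*s^+3 + 328203957568%:R*W*K^+5*a^+2*s^+2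 + 24807236461184%:R*W*K^+5*a^+3*s + 538232925140416%:R*W*K^+5*a^+4 + 74688%:R*W*K^+6*s^+4 + 468333184%:R*W*K^+6*a*s^+3 + 192281126976%:R*W*K^+6*a^+2*s^+2 + 19164425510400%:R*W*K^+6*a^+3*s + 523444164126272%:R*W*K^+6*a^+4 + 8128%:R*W*K^+7*s^+4 + 134813440%:R*W*K^+7*a*s^+3 + 83926851520%:R*W*K^+7*a^+2*s^+2 + 11350858041472%:R*W*K^+7*a^+3*s + 398751535703616%:R*W*K^+7*a^+4 + 384%:R*W*K^+8*s^+4 + 27022464%:R*W*K^+8*a*s^+3 + 27291118336%:R*W*K^+8*a^+2*s^+2 + 5197093545216%:R*W*K^+8*a^+3*s + 241085625794880%:R*W*K^+8*a^+4 + 3592704%:R*W*K^+9*a*s^+3 + 6529368832%:R*W*K^+9*a^+2*s^+2 + 1839520072832%:R*W*K^+9*a^+3*s + 116470842859840%:R*W*K^+9*a^+4 + 285184%:R*W*K^+10*a*s^+3 + 1117048448%:R*W*K^+10*a^+2*s^+2 + 499232551168%:R*W*K^+10*a^+3*s + 45027267346112%:R*W*K^+10*a^+4 + 10240%:R*W*K^+11*a*s^+3 + 129391360%:R*W*K^+11*a^+2*s^+2 + 102017737984%:R*W*K^+11*a^+3*s + 13879713357248%:R*W*K^+11*a^+4 + 9094144%:R*W*K^+12*a^+2*s^+2 + 15194065920%:R*W*K^+12*a^+3*s + 3380296415744%:R*W*K^+12*a^+4 + 292864%:R*W*K^+13*a^+2*s^+2 + 1556879360%:R*W*K^+13*a^+3*s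 + 640052716800%:R*W*K^+13*a^+4 + 98125824%:R*W*K^+14*a^+3*s + 91824132096%:R*W*K^+14*a^+4 + 2867200%:R*W*K^+15*a^+3*s + 9578350592%:R*W*K^+15*a^+4 + 678019072%:R*W*K^+16*a^+4 + 28606464%:R*W*K^+17*a^+4 + 524288%:R*W*K^+18*a^+4 + 691200%:R*W^+2*s^+4 + 433617408%:R*W^+2*a*s^+3 + 46715470848%:R*W^+2*a^+2*s^+2 + 1614103967232%:R*W^+2*a^+3*s + 17738750794752%:R*W^+2*a^+4 + 1933056%:R*W^+2*K*s^+4 + 1797242880%:R*W^+2*K*a*s^+3 + 253608208896%:R*W^+2*K*a^+2*s^+2 + 10798706280960%:R*W^+2*K*a^+3*s + 141359969836800%:R*W^+2*K*a^+4 + 2300160%:R*W^+2*K^+2*s^+4 + 3330901120%:R*W^+2*K^+2*a*s^+3 + 627098258944%:R*W^+2*K^+2*a^+2*s^+2 + 33343468453248%:R*W^+2*K^+2*a^+3*s + 525731754182400%:R*W^+2*K^+2*a^+4 + 1509312%:R*W^+2*K^+3*s^+4 + 3636629888%:R*W^+2*K^+3*a*s^+3 + 934190932096%:R*W^+2*K^+3*a^+2*s^+2 + 62995584746240%:R*W^+2*K^+3*a^+3*s + 1211834607093696%:R*W^+2*K^+3*a^+4 + 589760%:R*W^+2*K^+4*s^+4 + 2591609344%:R*W^+2*K^+4*a*s^+3 + 934073463488%:R*W^+2*K^+4*a^+2*s^+2 + 81376619995904%:R*W^+2*K^+4*a^+3*s + 1938822094950976%:R*W^+2*K^+4*a^+4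 + 137216%:R*W^+2*K^+5*s^+4 + 1260617472%:R*W^+2*K^+5*a*s^+3 + 660635649792%:R*W^+2*K^+5*a^+2*s^+2 + 76053148766848%:R*W^+2*K^+5*a^+3*s + 2284528839463808%:R*W^+2*K^+5*a^+4 + 17600%:R*W^+2*K^+6*s^+4 + 424390528%:R*W^+2*K^+6*a*s^+3 + 339068395584%:R*W^+2*K^+6*a^+2*s^+2 + 53046762268032%:R*W^+2*K^+6*a^+3*s + 2052551085211968%:R*W^+2*K^+6*a^+4 + 960%:R*W^+2*K^+7*s^+4 + 97854528%:R*W^+2*K^+7*a*s^+3 + 127346954880%:R*W^+2*K^+7*a^+2*s^+2 + 28062840480256%:R*W^+2*K^+7*a^+3*s + 1435947836923648%:R*W^+2*K^+7*a^+4 + 14860032%:R*W^+2*K^+8*a*s^+3 + 34787152256%:R*W^+2*K^+8*a^+2*s^+2 + 11320967020800%:R*W^+2*K^+8*a^+3*s + 791687401324096%:R*W^+2*K^+8*a^+4 + 1359936%:R*W^+2*K^+9*a*s^+3 + 6760179584%:R*W^+2*K^+9*a^+2*s^+2 + 3468607970240%:R*W^+2*K^+9*a^+3*s + 345819596931328%:R*W^+2*K^+9*a^+4 + 60416%:R*W^+2*K^+10*a*s^+3 + 893084032%:R*W^+2*K^+10*a^+2*s^+2 + 795631083264%:R*W^+2*K^+10*a^+3*s + 119622856800576%:R*W^+2*K^+10*a^+4 + 512%:R*W^+2*K^+11*a*s^+3 + 73408128%:R*W^+2*K^+11*a^+2*s^+2 + 132845062080%:R*W^+2*K^+11*a^+3*s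 + 32560908107712%:R*W^+2*K^+11*a^+4 + 3084288%:R*W^+2*K^+12*a^+2*s^+2 + 15353700608%:R*W^+2*K^+12*a^+3*s + 6883057444992%:R*W^+2*K^+12*a^+4 + 33792%:R*W^+2*K^+13*a^+2*s^+2 + 1118051328%:R*W^+2*K^+13*a^+3*s + 1105024830848%:R*W^+2*K^+13*a^+4 + 41646080%:R*W^+2*K^+14*a^+3*s + 129911607296%:R*W^+2*K^+14*a^+4 + 368640%:R*W^+2*K^+15*a^+3*s + 10516275200%:R*W^+2*K^+15*a^+4 + 521713664%:R*W^+2*K^+16*a^+4 + 11886592%:R*W^+2*K^+17*a^+4 + 337152%:R*W^+3*s^+4 + 523123968%:R*W^+3*a*s^+3 + 93964291584%:R*W^+3*a^+2*s^+2 + 4599004836096%:R*W^+3*a^+3*s + 65823405974784%:R*W^+3*a^+4 + 815104%:R*W^+3*K*s^+4 + 1943275648%:R*W^+3*K*a*s^+3 + 466905799424%:R*W^+3*K*a^+2*s^+2 + 28584880934016%:R*W^+3*K*a^+3*s + 493015443388416%:R*W^+3*K*a^+4 + 814656%:R*W^+3*K^+2*s^+4 + 3192947456%:R*W^+3*K^+2*a*s^+3 + 1049666782464%:R*W^+3*K^+2*a^+2*s^+2 + 81608606408704%:R*W^+3*K^+2*a^+3*s + 1717631573792064%:R*W^+3*K^+2*a^+4 + 430784%:R*W^+3*K^+3*s^+4 + 3048393984%:R*W^+3*K^+3*a*s^+3 + 1410125530496%:R*W^+3*K^+3*a^+2*s^+2 + 141758827086592%:R*W^+3*K^+3*a^+3*s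 + 3694810298271296%:R*W^+3*K^+3*a^+4 + 127104%:R*W^+3*K^+4*s^+4 + 1866414592%:R*W^+3*K^+4*a*s^+3 + 1258797494272%:R*W^+3*K^+4*a^+2*s^+2 + 167239464119296%:R*W^+3*K^+4*a^+3*s + 5492546071477376%:R*W^+3*K^+4*a^+4 + 19840%:R*W^+3*K^+5*s^+4 + 761894528%:R*W^+3*K^+5*a*s^+3 + 784981554432%:R*W^+3*K^+5*a^+2*s^+2 + 141591431883008%:R*W^+3*K^+5*a^+3*s + 5983003063758080%:R*W^+3*K^+5*a^+4 + 1280%:R*W^+3*K^+6*s^+4 + 208353664%:R*W^+3*K^+6*a*s^+3 + 349615008896%:R*W^+3*K^+6*a^+2*s^+2 + 88582602087808%:R*W^+3*K^+6*a^+3*s + 4939959890552064%:R*W^+3*K^+6*a^+4 + 37187840%:R*W^+3*K^+7*a*s^+3 + 111590221312%:R*W^+3*K^+7*a^+2*s^+2 + 41515175564032%:R*W^+3*K^+7*a^+3*s + 3153634875473536%:R*W^+3*K^+7*a^+4 + 4040576%:R*W^+3*K^+8*a*s^+3 + 25177490560%:R*W^+3*K^+8*a^+2*s^+2 + 14603369951872%:R*W^+3*K^+8*a^+3*s + 1573171972262912%:R*W^+3*K^+8*a^+4 + 227328%:R*W^+3*K^+9*a*s^+3 + 3878160128%:R*W^+3*K^+9*a^+2*s^+2 + 3820430139264%:R*W^+3*K^+9*a^+3*s + 615296396755328%:R*W^+3*K^+9*a^+4 + 4096%:R*W^+3*K^+10*a*s^+3 + 380622208%:R*W^+3*K^+10*a^+2*s^+2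 + 726935865856%:R*W^+3*K^+10*a^+3*s + 188085171061632%:R*W^+3*K^+10*a^+4 + 20664320%:R*W^+3*K^+11*a^+2*s^+2 + 96509019648%:R*W^+3*K^+11*a^+3*s + 44478040962560%:R*W^+3*K^+11*a^+4 + 431104%:R*W^+3*K^+12*a^+2*s^+2 + 8287916032%:R*W^+3*K^+12*a^+3*s + 7982957099136%:R*W^+3*K^+12*a^+4 + 395497472%:R*W^+3*K^+13*a^+3*s + 1053141069312%:R*W^+3*K^+13*a^+4 + 7053312%:R*W^+3*K^+14*a^+3*s + 96748084224%:R*W^+3*K^+14*a^+4 + 5607501824%:R*W^+3*K^+15*a^+4 + 164814848%:R*W^+3*K^+16*a^+4 + 1048576%:R*W^+3*K^+17*a^+4 + 91392%:R*W^+4*s^+4 + 406431360%:R*W^+4*a*s^+3 + 127910482560%:R*W^+4*a^+2*s^+2 + 9092951246592%:R*W^+4*a^+3*s + 171949307956992%:R*W^+4*a^+4 + 187136%:R*W^+4*K*s^+4 + 1345044288%:R*W^+4*K*a*s^+3 + 579656694656%:R*W^+4*K*a^+2*s^+2 + 52355292670080%:R*W^+4*K*a^+3*s + 1207455530842368%:R*W^+4*K*a^+4 + 151872%:R*W^+4*K^+2*s^+4 + 1943294976%:R*W^+4*K^+2*a*s^+3 + 1179525919488%:R*W^+4*K^+2*a^+2*s^+2 + 137733621830656%:R*W^+4*K^+2*a^+3*s + 3929283037991232%:R*W^+4*K^+2*a^+4 + 61056%:R*W^+4*K^+3*s^+4 + 1604428800%:R*W^+4*K^+3*a*s^+3 +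 1421095713536%:R*W^+4*K^+3*a^+2*s^+2 + 219080044144960%:R*W^+4*K^+3*a^+3*s + 7861223561848640%:R*W^+4*K^+3*a^+4 + 12160%:R*W^+4*K^+4*s^+4 + 831068288%:R*W^+4*K^+4*a*s^+3 + 1124820753408%:R*W^+4*K^+4*a^+2*s^+2 + 234891446636928%:R*W^+4*K^+4*a^+3*s + 10815194320348416%:R*W^+4*K^+4*a^+4 + 960%:R*W^+4*K^+5*s^+4 + 278516224%:R*W^+4*K^+5*a*s^+3 + 613089019520%:R*W^+4*K^+5*a^+2*s^+2 + 179087669559168%:R*W^+4*K^+5*a^+3*s + 10839888054293504%:R*W^+4*K^+5*a^+4 + 59856128%:R*W^+4*K^+6*a*s^+3 + 234292201216%:R*W^+4*K^+6*a^+2*s^+2 + 99762208608256%:R*W^+4*K^+6*a^+3*s + 8178879424033920%:R*W^+4*K^+6*a^+4 + 7833024%:R*W^+4*K^+7*a*s^+3 + 62598843776%:R*W^+4*K^+7*a^+2*s^+2 + 41040575604160%:R*W^+4*K^+7*a^+3*s + 4732264122652736%:R*W^+4*K^+7*a^+4 + 549376%:R*W^+4*K^+8*a*s^+3 + 11420208768%:R*W^+4*K^+8*a^+2*s^+2 + 12439456273536%:R*W^+4*K^+8*a^+3*s + 2118125969583872%:R*W^+4*K^+8*a^+4 + 14592%:R*W^+4*K^+9*a*s^+3 + 1350004736%:R*W^+4*K^+9*a^+2*s^+2 + 2735070949312%:R*W^+4*K^+9*a^+3*s + 734053792363200%:R*W^+4*K^+9*a^+4 + 93107584%:R*W^+4*K^+10*a^+2*s^+2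 + 422213388160%:R*W^+4*K^+10*a^+3*s + 195651746778496%:R*W^+4*K^+10*a^+4 + 2957056%:R*W^+4*K^+11*a^+2*s^+2 + 43102238528%:R*W^+4*K^+11*a^+3*s + 39491359355136%:R*W^+4*K^+11*a^+4 + 18432%:R*W^+4*K^+12*a^+2*s^+2 + 2599064960%:R*W^+4*K^+12*a^+3*s + 5873478724224%:R*W^+4*K^+12*a^+4 + 72265216%:R*W^+4*K^+13*a^+3*s + 614579427072%:R*W^+4*K^+13*a^+4 + 410624%:R*W^+4*K^+14*a^+3*s + 41702635776%:R*W^+4*K^+14*a^+4 + 1559108096%:R*W^+4*K^+15*a^+4 + 20731904%:R*W^+4*K^+16*a^+4 + 13056%:R*W^+5*s^+4 + 212836608%:R*W^+5*a*s^+3 + 124735831744%:R*W^+5*a^+2*s^+2 + 13251405142272%:R*W^+5*a^+3*s + 336422542987008%:R*W^+5*a^+4 + 22016%:R*W^+5*K*s^+4 + 622688640%:R*W^+5*K*a*s^+3 + 513390789440%:R*W^+5*K*a^+2*s^+2 + 70458304637568%:R*W^+5*K*a^+3*s + 2208949715511552%:R*W^+5*K*a^+4 + 13760%:R*W^+5*K^+2*s^+4 + 782641024%:R*W^+5*K^+2*a*s^+3 + 940710898752%:R*W^+5*K^+2*a^+2*s^+2 + 170160924337408%:R*W^+5*K^+2*a^+3*s + 6693446903038016%:R*W^+5*K^+2*a^+4 + 3776%:R*W^+5*K^+3*s^+4 + 550434432%:R*W^+5*K^+3*a*s^+3 + 1009912606272%:R*W^+5*K^+3*a^+2*s^+2 +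 246726134426240%:R*W^+5*K^+3*a^+3*s + 12409671577280704%:R*W^+5*K^+3*a^+4 + 384%:R*W^+5*K^+4*s^+4 + 236021376%:R*W^+5*K^+4*a*s^+3 + 703035029056%:R*W^+5*K^+4*a^+2*s^+2 + 239105668356864%:R*W^+5*K^+4*a^+3*s + 15732724728388288%:R*W^+5*K^+4*a^+4 + 62827008%:R*W^+5*K^+5*a*s^+3 + 331450378048%:R*W^+5*K^+5*a^+2*s^+2 + 163077744839552%:R*W^+5*K^+5*a^+3*s + 14435280725205184%:R*W^+5*K^+5*a^+4 + 10048768%:R*W^+5*K^+6*a*s^+3 + 107190735808%:R*W^+5*K^+6*a^+2*s^+2 + 80220652924800%:R*W^+5*K^+6*a^+3*s + 9892363628654400%:R*W^+5*K^+6*a^+4 + 869376%:R*W^+5*K^+7*a*s^+3 + 23520948416%:R*W^+5*K^+7*a^+2*s^+2 + 28664987581696%:R*W^+5*K^+7*a^+3*s + 5149051726142784%:R*W^+5*K^+7*a^+4 + 30208%:R*W^+5*K^+8*a*s^+3 + 3373525376%:R*W^+5*K^+8*a^+2*s^+2 + 7384165868672%:R*W^+5*K^+8*a^+3*s + 2048929171881344%:R*W^+5*K^+8*a^+4 + 292352000%:R*W^+5*K^+9*a^+2*s^+2 + 1339149704576%:R*W^+5*K^+9*a^+3*s + 621897538115968%:R*W^+5*K^+9*a^+4 + 12965376%:R*W^+5*K^+10*a^+2*s^+2 + 163233726208%:R*W^+5*K^+10*a^+3*s + 142366528071168%:R*W^+5*K^+10*a^+4 + 188416%:R*W^+5*K^+11*a^+2*s^+2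 + 12278345984%:R*W^+5*K^+11*a^+3*s + 24035169222016%:R*W^+5*K^+11*a^+4 + 480931840%:R*W^+5*K^+12*a^+3*s + 2878609002112%:R*W^+5*K^+12*a^+4 + 6426624%:R*W^+5*K^+13*a^+3*s + 228749105408%:R*W^+5*K^+13*a^+4 + 10647996416%:R*W^+5*K^+14*a^+4 + 219928576%:R*W^+5*K^+15*a^+4 + 786432%:R*W^+5*K^+16*a^+4 + 768%:R*W^+6*s^+4 + 76185600%:R*W^+6*a*s^+3 + 89921270720%:R*W^+6*a^+2*s^+2 + 14756111229696%:R*W^+6*a^+3*s + 512042699881728%:R*W^+6*a^+4 + 1024%:R*W^+6*K*s^+4 + 195127040%:R*W^+6*K*a*s^+3 + 334507975168%:R*W^+6*K*a^+2*s^+2 + 72200787150592%:R*W^+6*K*a^+3*s + 3134618214078720%:R*W^+6*K*a^+4 + 448%:R*W^+6*K^+2*s^+4 + 210327040%:R*W^+6*K^+2*a*s^+3 + 548591074240%:R*W^+6*K^+2*a^+2*s^+2 + 159404596617344%:R*W^+6*K^+2*a^+3*s + 8814640023840448%:R*W^+6*K^+2*a^+4 + 64%:R*W^+6*K^+3*s^+4 + 123366464%:R*W^+6*K^+3*a*s^+3 + 520785802752%:R*W^+6*K^+3*a^+2*s^+2 + 209631375241984%:R*W^+6*K^+3*a^+3*s + 15084257033067392%:R*W^+6*K^+3*a^+4 + 42376960%:R*W^+6*K^+4*a*s^+3 + 315732518720%:R*W^+6*K^+4*a^+2*s^+2 + 182503838622976%:R*W^+6*K^+4*a^+3*s + 17539762283940032%:R*W^+6*K^+4*a^+4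 + 8481984%:R*W^+6*K^+5*a*s^+3 + 127103941248%:R*W^+6*K^+5*a^+2*s^+2 + 110507164813632%:R*W^+6*K^+5*a^+3*s + 14649851257707904%:R*W^+6*K^+5*a^+4 + 908800%:R*W^+6*K^+6*a*s^+3 + 34179267776%:R*W^+6*K^+6*a^+2*s^+2 + 47548567051136%:R*W^+6*K^+6*a^+3*s + 9056498849454016%:R*W^+6*K^+6*a^+4 + 39680%:R*W^+6*K^+7*a*s^+3 + 6005269504%:R*W^+6*K^+7*a^+2*s^+2 + 14577980820288%:R*W^+6*K^+7*a^+3*s + 4205480768510784%:R*W^+6*K^+7*a^+4 + 650689792%:R*W^+6*K^+8*a^+2*s^+2 + 3139927619072%:R*W^+6*K^+8*a^+3*s + 1472320592312320%:R*W^+6*K^+8*a^+4 + 38473472%:R*W^+6*K^+9*a^+2*s^+2 + 459101150272%:R*W^+6*K^+9*a^+3*s + 386198403584896%:R*W^+6*K^+9*a^+4 + 929792%:R*W^+6*K^+10*a^+2*s^+2 + 42705403904%:R*W^+6*K^+10*a^+3*s + 74605378271744%:R*W^+6*K^+10*a^+4 + 3072%:R*W^+6*K^+11*a^+2*s^+2 + 2235457856%:R*W^+6*K^+11*a^+3*s + 10281731239424%:R*W^+6*K^+11*a^+4 + 50565120%:R*W^+6*K^+12*a^+3*s + 956926621568%:R*W^+6*K^+12*a^+4 + 210432%:R*W^+6*K^+13*a^+3*s + 54547752064%:R*W^+6*K^+13*a^+4 + 1566747136%:R*W^+6*K^+14*a^+4 + 13763584%:R*W^+6*K^+15*a^+4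 + 18427392%:R*W^+7*a*s^+3 + 48711855488%:R*W^+7*a^+2*s^+2 + 12842039418624%:R*W^+7*a^+3*s + 621562901934336%:R*W^+7*a^+4 + 40800768%:R*W^+7*K*a*s^+3 + 162850076416%:R*W^+7*K*a^+2*s^+2 + 57598428999680%:R*W^+7*K*a^+3*s + 3536522685931520%:R*W^+7*K*a^+4 + 36980096%:R*W^+7*K^+2*a*s^+3 + 237307234176%:R*W^+7*K^+2*a^+2*s^+2 + 115705602559872%:R*W^+7*K^+2*a^+3*s + 9194820439234816%:R*W^+7*K^+2*a^+4 + 17525504%:R*W^+7*K^+3*a*s^+3 + 197355670144%:R*W^+7*K^+3*a^+2*s^+2 + 137221362131200%:R*W^+7*K^+3*a^+3*s + 14459893437249408%:R*W^+7*K^+3*a^+4 + 4567936%:R*W^+7*K^+4*a*s^+3 + 102933929472%:R*W^+7*K^+4*a^+2*s^+2 + 106567090723968%:R*W^+7*K^+4*a^+3*s + 15340729596690560%:R*W^+7*K^+4*a^+4 + 618496%:R*W^+7*K^+5*a*s^+3 + 34800951680%:R*W^+7*K^+5*a^+2*s^+2 + 56786969590656%:R*W^+7*K^+5*a^+3*s + 11590500976131840%:R*W^+7*K^+5*a^+4 + 33792%:R*W^+7*K^+6*a*s^+3 + 7599769728%:R*W^+7*K^+6*a^+2*s^+2 + 21135442433408%:R*W^+7*K^+6*a^+3*s + 6414091312684928%:R*W^+7*K^+6*a^+4 + 1031074688%:R*W^+7*K^+7*a^+2*s^+2 + 5479430201600%:R*W^+7*K^+7*a^+3*s + 2631875289330432%:R*W^+7*K^+7*a^+4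 + 79281152%:R*W^+7*K^+8*a^+2*s^+2 + 967422438272%:R*W^+7*K^+8*a^+3*s + 800889694564992%:R*W^+7*K^+8*a^+4 + 2805760%:R*W^+7*K^+9*a^+2*s^+2 + 110829076608%:R*W^+7*K^+9*a^+3*s + 178702092221952%:R*W^+7*K^+9*a^+4 + 24576%:R*W^+7*K^+10*a^+2*s^+2 + 7521297920%:R*W^+7*K^+10*a^+3*s + 28514449332864%:R*W^+7*K^+10*a^+4 + 252337152%:R*W^+7*K^+11*a^+3*s + 3111550918656%:R*W^+7*K^+11*a^+4 + 2673664%:R*W^+7*K^+12*a^+3*s + 214765048192%:R*W^+7*K^+12*a^+4 + 8104351744%:R*W^+7*K^+13*a^+4 + 121478144%:R*W^+7*K^+14*a^+4 + 262144%:R*W^+7*K^+15*a^+4 + 2884992%:R*W^+8*a*s^+3 + 19938261760%:R*W^+8*a^+2*s^+2 + 8857837803776%:R*W^+8*a^+3*s + 612032767390464%:R*W^+8*a^+4 + 5432000%:R*W^+8*K*a*s^+3 + 59497648256%:R*W^+8*K*a^+2*s^+2 + 36257648413184%:R*W^+8*K*a^+3*s + 3225347531612416%:R*W^+8*K*a^+4 + 4022400%:R*W^+8*K^+2*a*s^+3 + 76358188928%:R*W^+8*K^+2*a^+2*s^+2 + 65916726969728%:R*W^+8*K^+2*a^+3*s + 7721526052246912%:R*W^+8*K^+2*a^+4 + 1462336%:R*W^+8*K^+3*a*s^+3 + 54984311552%:R*W^+8*K^+3*a^+2*s^+2 + 70034391256448%:R*W^+8*K^+3*a^+3*s + 11104308457840256%:R*W^+8*K^+3*a^+4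 + 260608%:R*W^+8*K^+4*a*s^+3 + 24282971520%:R*W^+8*K^+4*a^+2*s^+2 + 48122234535808%:R*W^+8*K^+4*a^+3*s + 10685155145614848%:R*W^+8*K^+4*a^+4 + 18176%:R*W^+8*K^+5*a*s^+3 + 6741518848%:R*W^+8*K^+5*a^+2*s^+2 + 22335682962112%:R*W^+8*K^+5*a^+3*s + 7250216034185024%:R*W^+8*K^+5*a^+4 + 1155446144%:R*W^+8*K^+6*a^+2*s^+2 + 7095726507264%:R*W^+8*K^+6*a^+3*s + 3559745975787264%:R*W^+8*K^+6*a^+4 + 114282240%:R*W^+8*K^+7*a^+2*s^+2 + 1528177203456%:R*W^+8*K^+7*a^+3*s + 1276289653232192%:R*W^+8*K^+7*a^+4 + 5560320%:R*W^+8*K^+8*a^+2*s^+2 + 215736040192%:R*W^+8*K^+8*a^+3*s + 332722682114432%:R*W^+8*K^+8*a^+4 + 86016%:R*W^+8*K^+9*a^+2*s^+2 + 18654529472%:R*W^+8*K^+9*a^+3*s + 61942156143744%:R*W^+8*K^+9*a^+4 + 867069440%:R*W^+8*K^+10*a^+3*s + 7946424457088%:R*W^+8*K^+10*a^+4 + 16317696%:R*W^+8*K^+11*a^+3*s + 659603201088%:R*W^+8*K^+11*a^+4 + 49152%:R*W^+8*K^+12*a^+3*s + 31629154560%:R*W^+8*K^+12*a^+4 + 698657984%:R*W^+8*K^+13*a^+4 + 4034560%:R*W^+8*K^+14*a^+4 + 264192%:R*W^+9*a*s^+3 + 6139782336%:R*W^+9*a^+2*s^+2 + 4880287086336%:R*W^+9*a^+3*s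 + 494517862161920%:R*W^+9*a^+4 + 413696%:R*W^+9*K*a*s^+3 + 16220538688%:R*W^+9*K*a^+2*s^+2 + 18139808257536%:R*W^+9*K*a^+3*s + 2404494113158656%:R*W^+9*K*a^+4 + 239104%:R*W^+9*K^+2*a*s^+3 + 18131649088%:R*W^+9*K^+2*a^+2*s^+2 + 29661085784704%:R*W^+9*K^+2*a^+3*s + 5275953850596224%:R*W^+9*K^+2*a^+4 + 60416%:R*W^+9*K^+3*a*s^+3 + 11134012992%:R*W^+9*K^+3*a^+2*s^+2 + 28015881267072%:R*W^+9*K^+3*a^+3*s + 6899665088342912%:R*W^+9*K^+3*a^+4 + 5632%:R*W^+9*K^+4*a*s^+3 + 4074386560%:R*W^+9*K^+4*a^+2*s^+2 + 16868134448000%:R*W^+9*K^+4*a^+3*s + 5980908988795200%:R*W^+9*K^+4*a^+4 + 898889472%:R*W^+9*K^+5*a^+2*s^+2 + 6735493272576%:R*W^+9*K^+5*a^+3*s + 3614111878922816%:R*W^+9*K^+5*a^+4 + 114471424%:R*W^+9*K^+6*a^+2*s^+2 + 1796929252480%:R*W^+9*K^+6*a^+3*s + 1557852756142656%:R*W^+9*K^+6*a^+4 + 7414784%:R*W^+9*K^+7*a^+2*s^+2 + 314400872576%:R*W^+9*K^+7*a^+3*s + 481485858204864%:R*W^+9*K^+7*a^+4 + 172032%:R*W^+9*K^+8*a^+2*s^+2 + 34358253184%:R*W^+9*K^+8*a^+3*s + 105628693304256%:R*W^+9*K^+8*a^+4 + 2129112576%:R*W^+9*K^+9*a^+3*s +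 16008969189184%:R*W^+9*K^+9*a^+4 + 61450240%:R*W^+9*K^+10*a^+3*s + 1593340020032%:R*W^+9*K^+10*a^+4 + 499712%:R*W^+9*K^+11*a^+3*s + 95127214784%:R*W^+9*K^+11*a^+4 + 2870522240%:R*W^+9*K^+12*a^+4 + 29988864%:R*W^+9*K^+13*a^+4 + 32768%:R*W^+9*K^+14*a^+4 + 10752%:R*W^+10*a*s^+3 + 1400948928%:R*W^+10*a^+2*s^+2 + 2153660205824%:R*W^+10*a^+3*s + 330358742802944%:R*W^+10*a^+4 + 13568%:R*W^+10*K*a*s^+3 + 3243908608%:R*W^+10*K*a^+2*s^+2 + 7227144062720%:R*W^+10*K*a^+3*s + 1475674325758208%:R*W^+10*K*a^+4 + 5632%:R*W^+10*K^+2*a*s^+3 + 3113343680%:R*W^+10*K^+2*a^+2*s^+2 + 10551687242240%:R*W^+10*K^+2*a^+3*s + 2952091741158272%:R*W^+10*K^+2*a^+4 + 768%:R*W^+10*K^+3*a*s^+3 + 1596794752%:R*W^+10*K^+3*a^+2*s^+2 + 8779286297856%:R*W^+10*K^+3*a^+3*s + 3488126636036800%:R*W^+10*K^+3*a^+4 + 469096960%:R*W^+10*K^+4*a^+2*s^+2 + 4577960241152%:R*W^+10*K^+4*a^+3*s + 2702190377813696%:R*W^+10*K^+4*a^+4 + 78002432%:R*W^+10*K^+5*a^+2*s^+2 + 1548852445248%:R*W^+10*K^+5*a^+3*s + 1439694230956160%:R*W^+10*K^+5*a^+4 + 6654976%:R*W^+10*K^+6*a^+2*s^+2 + 339963393536%:R*W^+10*K^+6*a^+3*s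 + 537895022469952%:R*W^+10*K^+6*a^+4 + 215040%:R*W^+10*K^+7*a^+2*s^+2 + 46939216320%:R*W^+10*K^+7*a^+3*s + 140925338210816%:R*W^+10*K^+7*a^+4 + 3797020160%:R*W^+10*K^+8*a^+3*s + 25428986916288%:R*W^+10*K^+8*a^+4 + 155807488%:R*W^+10*K^+9*a^+3*s + 3036731104640%:R*W^+10*K^+9*a^+4 + 2334720%:R*W^+10*K^+10*a^+3*s + 223046018240%:R*W^+10*K^+10*a^+4 + 4096%:R*W^+10*K^+11*a^+3*s + 8798863936%:R*W^+10*K^+11*a^+4 + 140976128%:R*W^+10*K^+12*a^+4 + 437248%:R*W^+10*K^+13*a^+4 + 229796096%:R*W^+11*a^+2*s^+2 + 759720311808%:R*W^+11*a^+3*s + 183265496593152%:R*W^+11*a^+4 + 460529536%:R*W^+11*K*a^+2*s^+2 + 2286194401664%:R*W^+11*K*a^+3*s + 748370580993024%:R*W^+11*K*a^+4 + 372210688%:R*W^+11*K^+2*a^+2*s^+2 + 2954637883520%:R*W^+11*K^+2*a^+3*s + 1356668344805952%:R*W^+11*K^+2*a^+4 + 154702208%:R*W^+11*K^+3*a^+2*s^+2 + 2141545973248%:R*W^+11*K^+3*a^+3*s + 1437399886353984%:R*W^+11*K^+3*a^+4 + 34671616%:R*W^+11*K^+4*a^+2*s^+2 + 953260021120%:R*W^+11*K^+4*a^+3*s + 985691925489536%:R*W^+11*K^+4*a^+4 + 3930112%:R*W^+11*K^+5*a^+2*s^+2 + 268054525824%:R*W^+11*K^+5*a^+3*s + 457419076895488%:R*W^+11*K^+5*a^+4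 + 172032%:R*W^+11*K^+6*a^+2*s^+2 + 47127068416%:R*W^+11*K^+6*a^+3*s + 145781480389760%:R*W^+11*K^+6*a^+4 + 4932967936%:R*W^+11*K^+7*a^+3*s + 31683888559744%:R*W^+11*K^+7*a^+4 + 276015616%:R*W^+11*K^+8*a^+3*s + 4560747531136%:R*W^+11*K^+8*a^+4 + 6512640%:R*W^+11*K^+9*a^+3*s + 409815876224%:R*W^+11*K^+9*a^+4 + 32768%:R*W^+11*K^+10*a^+3*s + 20582147072%:R*W^+11*K^+10*a^+4 + 463304704%:R*W^+11*K^+11*a^+4 + 2709504%:R*W^+11*K^+12*a^+4 + 25626112%:R*W^+12*a^+2*s^+2 + 212715705344%:R*W^+12*a^+3*s + 84557563062528%:R*W^+12*a^+4 + 43736576%:R*W^+12*K*a^+2*s^+2 + 569456932224%:R*W^+12*K*a^+3*s + 313884855493376%:R*W^+12*K*a^+4 + 28953088%:R*W^+12*K^+2*a^+2*s^+2 + 644622740608%:R*W^+12*K^+2*a^+3*s + 511964531587904%:R*W^+12*K^+2*a^+4 + 9294336%:R*W^+12*K^+3*a^+2*s^+2 + 401423000896%:R*W^+12*K^+3*a^+3*s + 481988236677184%:R*W^+12*K^+3*a^+4 + 1443840%:R*W^+12*K^+4*a^+2*s^+2 + 149753781120%:R*W^+12*K^+4*a^+3*s + 289174974656768%:R*W^+12*K^+4*a^+4 + 86016%:R*W^+12*K^+5*a^+2*s^+2 + 34128288320%:R*W^+12*K^+5*a^+3*s + 115103973484928%:R*W^+12*K^+5*a^+4 + 4631913984%:R*W^+12*K^+6*a^+3*s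 + 30650897478656%:R*W^+12*K^+6*a^+4 + 345974528%:R*W^+12*K^+7*a^+3*s + 5367396717376%:R*W^+12*K^+7*a^+4 + 11870208%:R*W^+12*K^+8*a^+3*s + 590086370176%:R*W^+12*K^+8*a^+4 + 114688%:R*W^+12*K^+9*a^+3*s + 37163559488%:R*W^+12*K^+9*a^+4 + 1116719104%:R*W^+12*K^+10*a^+4 + 10293248%:R*W^+12*K^+11*a^+4 + 1739776%:R*W^+13*a^+2*s^+2 + 46649155584%:R*W^+13*a^+3*s + 32413911064320%:R*W^+13*a^+4 + 2475008%:R*W^+13*K*a^+2*s^+2 + 110037349760%:R*W^+13*K*a^+3*s + 108662748631296%:R*W^+13*K*a^+4 + 1285120%:R*W^+13*K^+2*a^+2*s^+2 + 107675932032%:R*W^+13*K^+2*a^+3*s + 158105855240256%:R*W^+13*K^+2*a^+4 + 291840%:R*W^+13*K^+3*a^+2*s^+2 + 56597224576%:R*W^+13*K^+3*a^+3*s + 130794457852096%:R*W^+13*K^+3*a^+4 + 24576%:R*W^+13*K^+4*a^+2*s^+2 + 17273580160%:R*W^+13*K^+4*a^+3*s + 67649583146304%:R*W^+13*K^+4*a^+4 + 3081845248%:R*W^+13*K^+5*a^+3*s + 22639645347136%:R*W^+13*K^+5*a^+4 + 305497088%:R*W^+13*K^+6*a^+3*s + 4897533599808%:R*W^+13*K^+6*a^+4 + 14622720%:R*W^+13*K^+7*a^+3*s + 662712941504%:R*W^+13*K^+7*a^+4 + 229376%:R*W^+13*K^+8*a^+3*s + 52004714368%:R*W^+13*K^+8*a^+4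 + 2023917568%:R*W^+13*K^+9*a^+4 + 26689536%:R*W^+13*K^+10*a^+4 + 54272%:R*W^+14*a^+2*s^+2 + 7839416320%:R*W^+14*a^+3*s + 10283416362240%:R*W^+14*a^+4 + 62464%:R*W^+14*K*a^+2*s^+2 + 16103214080%:R*W^+14*K*a^+3*s + 30892462968576%:R*W^+14*K*a^+4 + 23552%:R*W^+14*K^+2*a^+2*s^+2 + 13392184832%:R*W^+14*K^+2*a^+3*s + 39680163372736%:R*W^+14*K^+2*a^+4 + 3072%:R*W^+14*K^+3*a^+2*s^+2 + 5803968768%:R*W^+14*K^+3*a^+3*s + 28440308219392%:R*W^+14*K^+3*a^+4 + 1402112512%:R*W^+14*K^+4*a^+3*s + 12438735506496%:R*W^+14*K^+4*a^+4 + 186049280%:R*W^+14*K^+5*a^+3*s + 3405696850048%:R*W^+14*K^+5*a^+4 + 12214272%:R*W^+14*K^+6*a^+3*s + 574692357056%:R*W^+14*K^+6*a^+4 + 286720%:R*W^+14*K^+7*a^+3*s + 56277587392%:R*W^+14*K^+7*a^+4 + 2791475200%:R*W^+14*K^+8*a^+4 + 49809408%:R*W^+14*K^+9*a^+4 + 974456832%:R*W^+15*a^+3*s + 2681034313472%:R*W^+15*a^+4 + 1717625344%:R*W^+15*K*a^+3*s + 7150616525824%:R*W^+15*K*a^+4 + 1186613760%:R*W^+15*K^+2*a^+3*s + 8002122110848%:R*W^+15*K^+2*a^+4 + 410553856%:R*W^+15*K^+3*a^+3*s + 4878223458304%:R*W^+15*K^+3*a^+4 + 74833408%:R*W^+15*K^+4*a^+3*s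 + 1757019608448%:R*W^+15*K^+4*a^+4 + 6758400%:R*W^+15*K^+5*a^+3*s + 378284327680%:R*W^+15*K^+5*a^+4 + 229376%:R*W^+15*K^+6*a^+3*s + 46699467520%:R*W^+15*K^+6*a^+4 + 2938480640%:R*W^+15*K^+7*a^+4 + 68775936%:R*W^+15*K^+8*a^+4 + 84398080%:R*W^+16*a^+3*s + 568099806464%:R*W^+16*a^+4 + 125250560%:R*W^+16*K*a^+3*s + 1329983803136%:R*W^+16*K*a^+4 + 69574656%:R*W^+16*K^+2*a^+3*s + 1274711205376%:R*W^+16*K^+2*a^+4 + 18351104%:R*W^+16*K^+3*a^+3*s + 644391274496%:R*W^+16*K^+3*a^+4 + 2334720%:R*W^+16*K^+4*a^+3*s + 183892933888%:R*W^+16*K^+4*a^+4 + 114688%:R*W^+16*K^+5*a^+3*s + 29232027904%:R*W^+16*K^+5*a^+4 + 2348091392%:R*W^+16*K^+6*a^+4 + 71110656%:R*W^+16*K^+7*a^+4 + 4546560%:R*W^+17*a^+3*s + 96238675968%:R*W^+17*a^+4 + 5537792%:R*W^+17*K*a^+3*s + 194963021824%:R*W^+17*K*a^+4 + 2351104%:R*W^+17*K^+2*a^+3*s + 156344529920%:R*W^+17*K^+2*a^+4 + 442368%:R*W^+17*K^+3*a^+3*s + 63152218112%:R*W^+17*K^+3*a^+4 + 32768%:R*W^+17*K^+4*a^+3*s + 13424702464%:R*W^+17*K^+4*a^+4 + 1403289600%:R*W^+17*K^+5*a^+4 + 55050240%:R*W^+17*K^+6*a^+4 + 114688%:R*W^+18*a^+3*s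 + 12718780416%:R*W^+18*a^+4 + 110592%:R*W^+18*K*a^+3*s + 21888825344%:R*W^+18*K*a^+4 + 32768%:R*W^+18*K^+2*a^+3*s + 14196439040%:R*W^+18*K^+2*a^+4 + 4096%:R*W^+18*K^+3*a^+3*s + 4317154304%:R*W^+18*K^+3*a^+4 + 609875968%:R*W^+18*K^+4*a^+4 + 31517696%:R*W^+18*K^+5*a^+4 + 1263046656%:R*W^+19*a^+4 + 1801465856%:R*W^+19*K*a^+4 + 895035392%:R*W^+19*K^+2*a^+4 + 183402496%:R*W^+19*K^+3*a^+4 + 12974080%:R*W^+19*K^+4*a^+4 + 88621056%:R*W^+20*a^+4 + 101154816%:R*W^+20*K*a^+4 + 34783232%:R*W^+20*K^+2*a^+4 + 3637248%:R*W^+20*K^+3*a^+4 + 3915776%:R*W^+21*a^+4 + 3391488%:R*W^+21*K*a^+4 + 622592%:R*W^+21*K^+2*a^+4 + 81920%:R*W^+22*a^+4 + 49152%:R*W^+22*K*a^+4.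
Proof. rewrite /PS /Fn /Fd /Dg /p1 /p0 /p2. ring. Qed.

Ltac nn := repeat match goal with
 | |- is_true (0 <= _ + _) => apply: addr_ge0
 | |- is_true (0 <= _ * _) => apply: mulr_ge0
 | |- is_true (0 <= _ ^+ _) => apply: exprn_ge0
 | |- is_true (0 <= _ %:R) => apply: ler0n
 | |- _ => assumption
 end.

Lemma PS_pos (W K a s : rat) : 0 <= W -> 0 <= K -> 0 < a -> 0 <= s -> 0 < PS W K a s.
Proof.
move=> hW hK ha hs. have ha' := ltW ha.
rewrite PS_expand.
repeat match goal with
 | |- is_true (0 < _ + _) => apply: ltr_wpDr; first by nn
 end.
apply: mulr_gt0; first by rewrite ltr0n.
exact: exprn_gt0.
Qed.




Definition IndS (W K : rat) : rat :=
  let I := W + 1 in let N := I + K in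
  (p1 N I * Fn I K - p0 N I * Fd I K) * Fd I (K+1) - p2 N I * Fn I K * Fn I (K+1).

Lemma IndS_ge0 (W K : rat) : 0 <= W -> 0 <= K -> 0 <= IndS W K.
Proof.
move=> hW hK.
rewrite (_ : IndS W K = 2160%:R + 9120%:R*K + 15004%:R*K^+2 + 12396%:R*K^+3 + 5476%:R*K^+4 + 1236%:R*K^+5 + 112%:R*K^+6 + 8712%:R*W + 32932%:R*W*K + 48408%:R*W*K^+2 + 35348%:R*W*K^+3 + 13560%:R*W*K^+4 + 2592%:R*W*K^+5 + 192%:R*W*K^+6 + 14376%:R*W^+2 + 48100%:R*W^+2*K + 61760%:R*W^+2*K^+2 + 38380%:R*W^+2*K^+3 + 11984%:R*W^+2*K^+4 + 1720%:R*W^+2*K^+5 + 80%:R*W^+2*K^+6 + 12544%:R*W^+3 + 36640%:R*W^+3*K + 39968%:R*W^+3*K^+2 + 20120%:R*W^+3*K^+3 + 4632%:R*W^+3*K^+4 + 384%:R*W^+3*K^+5 + 6240%:R*W^+4 + 15656%:R*W^+4*K + 14004%:R*W^+4*K^+2 + 5348%:R*W^+4*K^+3 + 780%:R*W^+4*K^+4 + 20%:R*W^+4*K^+5 + 1768%:R*W^+5 + 3748%:R*W^+5*K + 2624%:R*W^+5*K^+2 + 692%:R*W^+5*K^+3 + 48%:R*W^+5*K^+4 + 264%:R*W^+6 + 468%:R*W^+6*K + 240%:R*W^+6*K^+2 + 36%:R*W^+6*K^+3 + 16%:R*W^+7 + 24%:R*W^+7*K + 8%:R*W^+7*K^+2);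 last first.
  rewrite /IndS /Fn /Fd /Dg /p1 /p0 /p2. ring.
by nn.
Qed.


Lemma bm_pos i m : (i <= m)%N -> 0 < bm i m.
Proof.
move=> him. rewrite bmS /Sq (big_nat_recr m) //.
apply: mulr_gt0; first by rewrite invr_gt0 exprn_gt0 // ltr0n.
apply: ltr_pwDr; last by apply: sumr_ge0 => k _; rewrite /Tq ler0n.
rewrite /Tq ltr0n !muln_gt0 expn_gt0 !bin_gt0 /=.
apply/andP; split; [apply/andP; split|]; lia.
Qed.

Lemma base i : 2%:R * (i%:R + 1) * bm i i.+1 =
   (2%:R * i%:R + 1) * (2%:R * i%:R + 3%:R) * bm i i.
Proof.
rewrite !bmS /Sq (big_nat_recr i.+1) // big_nat1 big_nat1 /Tq /=.
have e1 : ('C(2 * i.+1 - 2 * i, i.+1 - i) = 2)%N.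
  rewrite (_ : (2 * i.+1 - 2 * i = 2)%N); last lia.
  by rewrite (_ : (i.+1 - i = 1)%N) ?bin1; last lia.
have e2 : ('C(2 * i.+1 - 2 * i.+1, i.+1 - i.+1) = 1)%N by rewrite !subnn.
have e3 : ('C(2 * i - 2 * i, i - i) = 1)%N by rewrite !subnn.
have h := mul_bin_down (2 * i + 1)%N i.
rewrite (_ : (2 * i + 1 - i = i.+1)%N) in h; last lia.
rewrite (_ : ((2 * i + 1).-1 = 2 * i)%N) in h; last lia.
have E1 : ('C(i.+1 + i, i) = 'C(2 * i + 1, i))%N by f_equal; lia.
have E2 : ('C(i.+1 + i.+1, i.+1) = 'C(2 * i + 2, i + 1))%N by f_equal; lia.
have E3 : ('C(i + i, i) = 'C(2 * i, i))%N by f_equal; lia.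
rewrite e1 e2 e3 E1 E2 E3 binn binSn !natrM !natrX (L1 i).
rewrite (my_natr_div _ _ _ _ _ (esym h)) //.
have e4 : (2 * i.+1 = (2 * i).+2)%N by lia.
rewrite e4 !exprS.
have ex : (2%:R : rat) ^+ (2 * i) = (2%:R ^+ i) ^+ 2 by rewrite -exprM mulnC.
rewrite ex.
have hz2 : (2%:R ^+ i : rat) != 0 by apply: expf_neq0; rewrite pnatr_eq0.
ncast.
field.
have := ler0n rat i. move=> H.
by repeat (apply/andP; split); try (apply: lt0r_neq0; lra); rewrite ?hz2.
Qed.


Lemma posfacts (W K : rat) : 0 <= W -> 0 <= K ->
  [/\ 0 < Dg (W+1) K, 0 < Fn (W+1) K, 0 < Fd (W+1) K,
      0 < p2 (W+1+K) (W+1) & 0 < p0 (W+1+K) (W+1)].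
Proof.
move=> hW hK.
have hD : 0 < Dg (W+1) K.
  rewrite /Dg. have := mulr_ge0 hW hW. nra.
split => //.
- rewrite /Fn. apply: ltr_wpDr; first by apply: mulr_ge0 => //; apply: exprn_ge0; lra.
  apply: mulr_gt0 => //. have := mulr_ge0 (addr_ge0 hW hK) (addr_ge0 hW hK). nra.
- rewrite /Fd. apply: mulr_gt0 => //. apply: mulr_gt0; lra.
- rewrite /p2. apply: mulr_gt0; last lra. apply: mulr_gt0; lra.
- rewrite /p0. apply: mulr_gt0; last lra. apply: mulr_gt0; lra.
Qed.

Lemma key_gen (Fn0 Fd1 Fn1 p2v p0v p1v Fd0 b0 b1 b2 : rat) :
  p2v * b2 = p1v * b1 - p0v * b0 ->
  Fn0 * p2v * (Fd1 * b2 - Fn1 * b1) =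
  b1 * ((p1v * Fn0 - p0v * Fd0) * Fd1 - p2v * Fn0 * Fn1) + Fd1 * p0v * (Fd0 * b1 - Fn0 * b0).
Proof.
move=> h.
transitivity (Fn0 * Fd1 * (p2v * b2) - Fn0 * p2v * Fn1 * b1); first ring.
rewrite h. ring.
Qed.

Lemma lb (w k : nat) :
  0 <= Fd (w%:R + 1) k%:R * bm w.+1 (w.+1 + k).+1 - Fn (w%:R + 1) k%:R * bm w.+1 (w.+1 + k).
Proof.
have hW := ler0n rat w.
elim: k => [|k IH].
  rewrite addn0. have hb := base w.+1.
  rewrite -[(w.+1)%:R]natr1 in hb.
  rewrite (_ : Fd (w%:R + 1) 0%:R * bm w.+1 w.+2 - Fn (w%:R + 1) 0%:R * bm w.+1 w.+1
     = Dg (w%:R + 1) 0 * (2%:R * (w%:R + 1 + 1) * bm w.+1 w.+2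
        - (2%:R * (w%:R + 1) + 1) * (2%:R * (w%:R + 1) + 3%:R) * bm w.+1 w.+1)).
    by rewrite hb subrr mulr0.
  rewrite /Fd /Fn /Dg. ring.
have hK := ler0n rat k.
have [hD hFn hFd hp2 hp0] := posfacts _ _ hW hK.
have [_ hFn' hFd' _ _] := posfacts _ _ hW (addr_ge0 hK ler01).
have hInd := IndS_ge0 _ _ hW hK.
have hrec := bmrec w.+1 (w.+1 + k) (leq_addr _ _).
rewrite natrD -[(w.+1)%:R]natr1 in hrec.
rewrite addnS -[(k.+1)%:R]natr1.
set b0 := bm w.+1 (w.+1 + k) in IH hrec *.
set b1 := bm w.+1 (w.+1 + k).+1 in IH hrec *.
set b2 := bm w.+1 (w.+1 + k).+2 in hrec *.
have hb1 : 0 < b1 by apply: bm_pos; apply: leqW; exact: leq_addr.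
have key : Fn (w%:R + 1) k%:R * p2 (w%:R + 1 + k%:R) (w%:R + 1) *
   (Fd (w%:R + 1) (k%:R + 1) * b2 - Fn (w%:R + 1) (k%:R + 1) * b1)
   = b1 * IndS w%:R k%:R + Fd (w%:R + 1) (k%:R + 1) * p0 (w%:R + 1 + k%:R) (w%:R + 1) *
     (Fd (w%:R + 1) k%:R * b1 - Fn (w%:R + 1) k%:R * b0).
  rewrite (key_gen _ (Fd (w%:R + 1) (k%:R + 1)) (Fn (w%:R + 1) (k%:R + 1)) _ _ _ (Fd (w%:R + 1) k%:R) _ _ _ hrec).
  by rewrite /IndS.
have : 0 <= b1 * IndS w%:R k%:R + Fd (w%:R + 1) (k%:R + 1) * p0 (w%:R + 1 + k%:R) (w%:R + 1) *
     (Fd (w%:R + 1) k%:R * b1 - Fn (w%:R + 1) k%:R * b0).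
  apply: addr_ge0; first by apply: mulr_ge0 => //; exact: ltW.
  apply: mulr_ge0 => //; apply: mulr_ge0; exact: ltW.
rewrite -key pmulr_rge0 //. exact: mulr_gt0.
Qed.


Lemma r0 n : 2%:R * (n%:R + 1) * bm 0 n.+1 = (4%:R * n%:R + 3%:R) * bm 0 n.
Proof.
elim: n => [|n IH].
  have hb := base 0. rewrite mulr0n in hb *. lra.
have hrec := bmrec 0 n (leq0n n).
have hn := ler0n rat n.
have hp2 : p2 n%:R 0%:R != 0 by rewrite /p2 mulr0n subr0; apply: lt0r_neq0;
  apply: mulr_gt0; [apply: mulr_gt0; [apply: mulr_gt0|]|]; lra.
have h43 : (4%:R * n%:R + 3%:R : rat) != 0 by apply: lt0r_neq0; lra.
set b0 := bm 0 n in IH hrec *. set b1 := bm 0 n.+1 in IH hrec *.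
set b2 := bm 0 n.+2 in hrec *.
have hb0 : b0 = 2%:R * (n%:R + 1) * b1 / (4%:R * n%:R + 3%:R).
  rewrite IH. field. exact: h43.
have hb2 : b2 = (p1 n%:R 0%:R * b1 - p0 n%:R 0%:R * b0) / p2 n%:R 0%:R.
  rewrite -hrec. field. exact: hp2.
rewrite -natr1 hb2 hb0.
move: hp2. rewrite /p2 /p1 /p0 mulr0n => hp2.
field.
by repeat (apply/andP; split); apply: lt0r_neq0; lra.
Qed.

Lemma partB (n : nat) :
  bm 0 n.+1 ^+ 2 * (bm 0 n.+1 ^+ 2 - bm 0 n * bm 0 n.+2) <
  bm 0 n ^+ 2 * (bm 0 n.+2 ^+ 2 - bm 0 n.+1 * bm 0 n.+3).
Proof.
have hn := ler0n rat n.
have ha : 0 < bm 0 n by apply: bm_pos.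
have h1 := r0 n. have h2 := r0 n.+1. have h3 := r0 n.+2.
rewrite -!natr1 in h2 h3.
set a := bm 0 n in ha h1 *. set b := bm 0 n.+1 in h1 h2 *.
set c := bm 0 n.+2 in h2 h3 *. set e := bm 0 n.+3 in h3 *.
have hb : b = (4%:R * n%:R + 3%:R) / (2%:R * (n%:R + 1)) * a.
  have hD : (2%:R * (n%:R + 1) : rat) != 0 by apply: lt0r_neq0; lra.
  apply: (mulfI hD). rewrite h1. field. by repeat (apply/andP; split); apply: lt0r_neq0; lra.
have hc : c = (4%:R * (n%:R + 1) + 3%:R) / (2%:R * (n%:R + 1 + 1)) * b.
  have hD : (2%:R * (n%:R + 1 + 1) : rat) != 0 by apply: lt0r_neq0; lra.
  apply: (mulfI hD). rewrite h2. field. by repeat (apply/andP; split); apply: lt0r_neq0; lra.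
have he : e = (4%:R * (n%:R + 1 + 1) + 3%:R) / (2%:R * (n%:R + 1 + 1 + 1)) * c.
  have hD : (2%:R * (n%:R + 1 + 1 + 1) : rat) != 0 by apply: lt0r_neq0; lra.
  apply: (mulfI hD). rewrite h3. field. by repeat (apply/andP; split); apply: lt0r_neq0; lra.
rewrite he hc hb.
rewrite -subr_lt0.
set X := (X in X < 0).
have -> : X = - (a ^+ 4 * (4%:R * n%:R + 3%:R) ^+ 2 * (64%:R * n%:R ^+ 2 + 168%:R * n%:R + 88%:R))
   / ((2%:R * n%:R + 2%:R) ^+ 4 * (2%:R * n%:R + 4%:R) ^+ 2 * (2%:R * n%:R + 6%:R)).
  rewrite /X. field.
  by repeat (apply/andP; split); apply: lt0r_neq0; lra.
rewrite mulNr oppr_lt0.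
apply: divr_gt0.
  apply: mulr_gt0; first apply: mulr_gt0.
  - exact: exprn_gt0.
  - apply: exprn_gt0; lra.
  - have := mulr_ge0 hn hn. lra.
apply: mulr_gt0; first apply: mulr_gt0; try (apply: exprn_gt0); lra.
Qed.

Lemma PS_gen (Fn0 Fd0 P1 P0 P2 P1' P0' P2' a b c e : rat) :
  P2 * c = P1 * b - P0 * a -> P2' * e = P1' * c - P0' * b ->
  let B := Fn0 * a + (Fd0 * b - Fn0 * a) in
  let C := P1 * B - P0 * Fd0 * a in
  let E := P1' * C - P0' * P2 * B in
  B^+2 * (B^+2 * P2^+2 - a * C * Fd0 * P2) * P2' - a^+2 * Fd0^+2 * (C^+2 * P2' - B * E * P2)
  = Fd0^+4 * P2^+2 * P2' * (b^+2 * (b^+2 - a * c) - a^+2 * (c^+2 - b * e)).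
Proof.
move=> hc he B C E.
have hB : B = Fd0 * b by rewrite /B; ring.
have hC : C = Fd0 * (P2 * c) by rewrite /C hB hc; ring.
have hE : E = Fd0 * P2 * (P2' * e) by rewrite /E hC hB he; ring.
rewrite hE hC hB. ring.
Qed.


Lemma partA (w k : nat) :
  bm w.+1 (w.+1 + k) ^+ 2 * (bm w.+1 (w.+1 + k).+2 ^+ 2 - bm w.+1 (w.+1 + k).+1 * bm w.+1 (w.+1 + k).+3)
  < bm w.+1 (w.+1 + k).+1 ^+ 2 * (bm w.+1 (w.+1 + k).+1 ^+ 2 - bm w.+1 (w.+1 + k) * bm w.+1 (w.+1 + k).+2).
Proof.
have hW := ler0n rat w. have hK := ler0n rat k.
have hs := lb w k.
have [_ _ hFd hp2 _] := posfacts _ _ hW hK.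
have hp2' : 0 < p2 (w%:R + 1 + k%:R + 1) (w%:R + 1).
  rewrite /p2. apply: mulr_gt0; last lra. apply: mulr_gt0; lra.
have hrec1 := bmrec w.+1 (w.+1 + k) (leq_addr _ _).
rewrite natrD -[(w.+1)%:R]natr1 in hrec1.
have hrec2 := bmrec w.+1 (w.+1 + k).+1 (leqW (leq_addr _ _)).
rewrite -[((w.+1 + k).+1)%:R]natr1 natrD -[(w.+1)%:R]natr1 in hrec2.
have ha : 0 < bm w.+1 (w.+1 + k) by apply: bm_pos; exact: leq_addr.
set a := bm w.+1 (w.+1 + k) in hs hrec1 hrec2 ha *.
set b := bm w.+1 (w.+1 + k).+1 in hs hrec1 hrec2 *.
set c := bm w.+1 (w.+1 + k).+2 in hrec1 hrec2 *.
set e := bm w.+1 (w.+1 + k).+3 in hrec2 *.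
have hpos := PS_pos _ _ _ _ hW hK ha hs.
have hid := PS_gen (Fn (w%:R + 1) k%:R) (Fd (w%:R + 1) k%:R) _ _ _ _ _ _ _ _ _ _ hrec1 hrec2.
have hid' : PS w%:R k%:R a (Fd (w%:R + 1) k%:R * b - Fn (w%:R + 1) k%:R * a) =
  Fd (w%:R + 1) k%:R ^+ 4 * p2 (w%:R + 1 + k%:R) (w%:R + 1) ^+ 2 * p2 (w%:R + 1 + k%:R + 1) (w%:R + 1) *
  (b ^+ 2 * (b ^+ 2 - a * c) - a ^+ 2 * (c ^+ 2 - b * e)) by exact: hid.
rewrite hid' in hpos.
rewrite pmulr_rgt0 in hpos; last first.
  apply: mulr_gt0 => //. apply: mulr_gt0; exact: exprn_gt0.
by rewrite -subr_gt0.
Qed.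

Theorem theorem1p3 :
  (forall i m : nat, (1 <= i)%N -> (i + 1 <= m)%N ->
     bm i m ^+ 2 * (bm i m ^+ 2 - bm i m.-1 * bm i m.+1) >
     bm i m.-1 ^+ 2 * (bm i m.+1 ^+ 2 - bm i m * bm i m.+2)) /\
  (forall m : nat, (1 <= m)%N ->
     bm 0 m ^+ 2 * (bm 0 m ^+ 2 - bm 0 m.-1 * bm 0 m.+1) <
     bm 0 m.-1 ^+ 2 * (bm 0 m.+1 ^+ 2 - bm 0 m * bm 0 m.+2)).
Proof.
split.
  move=> i m hi him.
  case: i hi him => [//|w] _ him.
  have [k ->] : exists k, m = (w.+1 + k).+1 by exists (m - w.+2)%N; lia.
  exact: partA.
move=> [//|n] _ /=.
exact: partB.
Qed.
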